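(* For every $n\ge1$ and $i=1,2$, the formal semigroup $\mathcal{S}_{K_i}$ is not closed under addition (hence not a semigroup); indeed $4\in\mathcal{S}_{K_i}$ but $4n+4\notin\mathcal{S}_{K_i}$. Here $K_1,K_2$ are the closures of $(\sigma_2\sigma_1\sigma_3\sigma_2)(\sigma_1\sigma_2\sigma_3)^{4n}\sigma_2^{-1}(\sigma_2\sigma_3)^6$ and $(\sigma_2\sigma_1\sigma_3\sigma_2)(\sigma_1\sigma_2\sigma_3)^{4n}\sigma_3^{-1}(\sigma_2\sigma_3)^6$.
   Context: For a knot $K$ whose Alexander polynomial, normalized to be a polynomial with constant term $1$, is $\Delta_K(t)$, the formal semigroup $\mathcal{S}_K\subset\mathbb{Z}_{\ge0}$ is defined by $\Delta_K(t)/(1-t)=\sum_{s\in\mathcal{S}_K}t^s$. $\sigma_i$ are the standard generators of the $4$--strand braid group. *)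

(* Defs.v *)
From HB Require Import structures.
From mathcomp Require Import all_boot all_order all_algebra fraction.
Set Implicit Arguments. Unset Strict Implicit. Unset Printing Implicit Defensive.
Import Order.TTheory GRing.Theory Num.Theory.
Local Open Scope ring_scope.

(* The field of rational functions Q(t), realised as fractions of {poly int}. *)
Definition ratfun := {fraction {poly int}}.
Definition tofrac (p : {poly int}) : ratfun := @FracField.tofrac _ p.
Definition tvar : ratfun := tofrac 'X.

(* A braid word: letter (i, true) = sigma_i, (i, false) = sigma_i^{-1}. *)
Definition braid_word := seq (nat * bool).

(* Reduced Burau matrix of sigma_i in B_n (size (n-1) x (n-1), 1-based
   generators 1 <= i <= n-1); rows/columns indexed 0..n-2 stand for 1..n-1.
   Row i is ( .. , t, -t, 1, .. ) at columns i-1, i, i+1; other rows are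
   those of the identity. *)
Definition burau_gen (n i : nat) : 'M[ratfun]_(n.-1) :=
  \matrix_(r < n.-1, c < n.-1)
    if (r : nat).+1 == i then
      (if (c : nat).+2 == i then tvar
       else if (c : nat).+1 == i then - tvar
       else if (c : nat) == i then 1 else 0)
    else ((r : nat) == c)%:R.

Definition burau_letter (n : nat) (l : nat * bool) : 'M[ratfun]_(n.-1) :=
  if l.2 then burau_gen n l.1 else invmx (burau_gen n l.1).

Definition burau (n : nat) (w : braid_word) : 'M[ratfun]_(n.-1) :=
  foldr (fun l M => burau_letter n l *m M) 1%:M w.

(* p is the Alexander polynomial of the closure of the n-strand braid w,
   normalized to be a polynomial with constant term 1:
   p = +-t^k (1-t)/(1-t^n) det(I - Burau(w)) for some k : int. *)
Definition is_normalized_alexander (n : nat) (w : braid_word)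
    (p : {poly int}) : Prop :=
  p`_0 = 1 /\
  exists (e : bool) (k : int),
    tofrac p = (-1) ^+ e * tvar ^ k * ((1 - tvar) / (1 - tvar ^+ n)) *
           \det (1%:M - burau n w).

(* Formal semigroup: Delta(t)/(1-t) = sum_{s in S} t^s, i.e. the coefficient
   of t^s in Delta(t)/(1-t), namely sum_{j <= s} p_j, equals 1. *)
Definition in_formal_semigroup (p : {poly int}) (s : nat) : Prop :=
  \sum_(j < s.+1) p`_j = 1.

Definition K_word (n i : nat) : braid_word :=
  [:: (2, true); (1, true); (3, true); (2, true)]%N
  ++ flatten (nseq (4 * n) [:: (1, true); (2, true); (3, true)]%N)
  ++ [:: (i.+1, false)]
  ++ flatten (nseq 6 [:: (2, true); (3, true)]%N).

(* Main.v *)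
Require Import Defs.
From HB Require Import structures.
From mathcomp Require Import all_boot all_order all_algebra fraction.
From mathcomp Require Import ring zify.
Set Implicit Arguments. Unset Strict Implicit. Unset Printing Implicit Defensive.
Import Order.TTheory GRing.Theory Num.Theory.
Local Open Scope ring_scope.
Local Notation t := tvar.

Definition mk (a b c d e f g h k : ratfun) : 'M[ratfun]_3 :=
  \matrix_(r < 3, s < 3)
    nth 0 (nth [::] [:: [:: a; b; c]; [:: d; e; f]; [:: g; h; k]] r) s.

Lemma mk_mul a b c d e f g h k a' b' c' d' e' f' g' h' k' :
  mk a b c d e f g h k *m mk a' b' c' d' e' f' g' h' k' =
  mk (a*a' + b*d' + c*g') (a*b' + b*e' + c*h') (a*c' + b*f' + c*k')
     (d*a' + e*d' + f*g') (d*b' + e*e' + f*h') (d*c' + e*f' + f*k')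
     (g*a' + h*d' + k*g') (g*b' + h*e' + k*h') (g*c' + h*f' + k*k').
Proof.
apply/matrixP => r s; rewrite !mxE !big_ord_recr big_ord0 /= !mxE add0r.
by case: r => [[|[|[|r]]] Hr] //; case: s => [[|[|[|s]]] Hs].
Qed.

Lemma mk_sub a b c d e f g h k a' b' c' d' e' f' g' h' k' :
  mk a b c d e f g h k - mk a' b' c' d' e' f' g' h' k' =
  mk (a-a') (b-b') (c-c') (d-d') (e-e') (f-f') (g-g') (h-h') (k-k').
Proof.
apply/matrixP => r s; rewrite !mxE.
by case: r => [[|[|[|r]]] Hr] //; case: s => [[|[|[|s]]] Hs].
Qed.

Lemma scalar_mk a : (a%:M : 'M[ratfun]_3) = mk a 0 0 0 a 0 0 0 a.
Proof.
apply/matrixP => r s; rewrite !mxE.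
by case: r => [[|[|[|r]]] Hr] //; case: s => [[|[|[|s]]] Hs].
Qed.

Lemma det_mk a b c d e f g h k :
  \det (mk a b c d e f g h k) = a*e*k - a*f*h - b*d*k + b*f*g + c*d*h - c*e*g.
Proof.
rewrite (expand_det_row _ ord0) !big_ord_recr big_ord0 /=.
rewrite /cofactor.
do 3 rewrite (expand_det_row _ ord0) !big_ord_recr big_ord0 /= /cofactor !det_mx11.
rewrite !mxE /=.
ring.
Qed.

Lemma G1E : burau_gen 4 1 = mk (- t) 1 0 0 1 0 0 0 1.
Proof.
apply/matrixP => r s; rewrite !mxE.
by case: r => [[|[|[|r]]] Hr] //; case: s => [[|[|[|s]]] Hs].
Qed.
Lemma G2E : burau_gen 4 2 = mk 1 0 0 t (- t) 1 0 0 1.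
Proof.
apply/matrixP => r s; rewrite !mxE.
by case: r => [[|[|[|r]]] Hr] //; case: s => [[|[|[|s]]] Hs].
Qed.
Lemma G3E : burau_gen 4 3 = mk 1 0 0 0 1 0 0 t (- t).
Proof.
apply/matrixP => r s; rewrite !mxE.
by case: r => [[|[|[|r]]] Hr] //; case: s => [[|[|[|s]]] Hs].
Qed.

Lemma burau_cat m w1 w2 : burau m (w1 ++ w2) = burau m w1 *m burau m w2.
Proof.
elim: w1 => [|l w IH] /=; first by rewrite mul1mx.
by rewrite /burau /= -/(burau m w) -/(burau m (w ++ w2)) IH mulmxA.
Qed.

Lemma burau_nseq w m : burau 4 (flatten (nseq m w)) = (burau 4 w : 'M[ratfun]_3) ^+ m.
Proof.
elim: m => [|m IH] /=; first by rewrite expr0.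
by rewrite burau_cat IH exprS mulmxE.
Qed.

Ltac mkring := rewrite ?mk_mul; congr mk; ring.

Lemma scalar_mxXn (a : ratfun) m : ((a%:M : 'M[ratfun]_3) ^+ m) = (a ^+ m)%:M.
Proof.
elim: m => [|m IH]; first by rewrite !expr0.
by rewrite !exprS IH scalar_mxM mulmxE.
Qed.

Definition s123 : braid_word := [:: (1, true); (2, true); (3, true)]%N.

Lemma W_E : burau 4 s123 = mk 0 0 (- t) (t) 0 (- t) 0 (t) (- t).
Proof. rewrite /burau /= /burau_letter /= G1E G2E G3E mulmx1. mkring. Qed.

Lemma Delta_E n : burau 4 (flatten (nseq (4 * n) s123)) = (t ^+ (4 * n))%:M.
Proof.
rewrite burau_nseq W_E exprM.
have -> : (mk 0 0 (- t) (t) 0 (- t) 0 (t) (- t)) ^+ 4 = (t ^+ 4)%:M.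
  rewrite scalar_mk !exprS expr0 mulr1 -!mulmxE.
  have E2 : mk 0 0 (- t) (t) 0 (- t) 0 (t) (- t) *m mk 0 0 (- t) (t) 0 (- t) 0 (t) (- t)
     = mk 0 (- t^+2) (t^+2) 0 (- t^+2) 0 (t^+2) (- t^+2) 0 by mkring.
  rewrite E2 mulmxA E2. mkring.
by rewrite scalar_mxXn exprM.
Qed.

Definition Pm := mk 0 (- t) (1) 0 (- t^+2) 0 (t^+2) (- t^+2) 0.
Lemma P_E : burau 4 [:: (2, true); (1, true); (3, true); (2, true)]%N = Pm.
Proof. rewrite /burau /= /burau_letter /= G1E G2E G3E mulmx1. mkring. Qed.

Definition S1 := mk (1) 0 0 (t) 0 (- t) 0 (t) (- t).
Definition S6 := mk (1) 0 0 (t - t^+3 + t^+4 - t^+6) (t^+6) 0 (t^+2 - t^+3 + t^+5 - t^+6) 0 (t^+6).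
Lemma Q_E : burau 4 (flatten (nseq 6 [:: (2, true); (3, true)]%N)) = S6.
Proof.
rewrite burau_nseq.
have -> : burau 4 [:: (2, true); (3, true)]%N = S1.
  rewrite /burau /= /burau_letter /= G2E G3E mulmx1. mkring.
rewrite !exprS expr0 mulr1 -!mulmxE /S1.
have E2 : S1 *m S1 = mk (1) 0 0 (t) (- t^+2) (t^+2) (t^+2) (- t^+2) 0 by rewrite /S1; mkring.
rewrite /S1 in E2; rewrite E2.
have E3 : S1 *m mk (1) 0 0 (t) (- t^+2) (t^+2) (t^+2) (- t^+2) 0 = mk (1) 0 0 (t - t^+3) (t^+3) 0 (t^+2 - t^+3) 0 (t^+3) by rewrite /S1; mkring.
rewrite /S1 in E3; rewrite E3.
have E4 : S1 *m mk (1) 0 0 (t - t^+3) (t^+3) 0 (t^+2 - t^+3) 0 (t^+3) = mk (1) 0 0 (t - t^+3 + t^+4) 0 (- t^+4) (t^+2 - t^+3) (t^+4) (- t^+4) by rewrite /S1; mkring.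
rewrite /S1 in E4; rewrite E4.
have E5 : S1 *m mk (1) 0 0 (t - t^+3 + t^+4) 0 (- t^+4) (t^+2 - t^+3) (t^+4) (- t^+4) = mk (1) 0 0 (t - t^+3 + t^+4) (- t^+5) (t^+5) (t^+2 - t^+3 + t^+5) (- t^+5) 0 by rewrite /S1; mkring.
rewrite /S1 in E5; rewrite E5 /S6. mkring.
Qed.

Lemma tX : @FracField.tofrac _ 'X = t. Proof. by []. Qed.

Lemma t_neq0 : t != 0.
Proof. by rewrite /tvar /Defs.tofrac tofrac_eq0 polyX_eq0. Qed.

Lemma unit_mt (M : 'M[ratfun]_3) : \det M = - t -> M \in unitmx.
Proof. by move=> h; rewrite unitmxE unitfE h oppr_eq0 t_neq0. Qed.

Definition R1 := mk (1) 0 0 (t - t^+3 + t^+4) (- t^+5) (t^+5) (t^+2 - t^+3 + t^+5 - t^+6) 0 (t^+6).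
Definition R2 := mk (1) 0 0 (t - t^+3 + t^+4 - t^+6) (t^+6) 0 (t^+2 - t^+3 + t^+5 - t^+6) (t^+6) (- t^+5).

Lemma R1_E : invmx (burau_gen 4 2) *m S6 = R1.
Proof.
have U : burau_gen 4 2 \in unitmx by apply: unit_mt; rewrite G2E det_mk; ring.
have -> : S6 = burau_gen 4 2 *m R1 by rewrite G2E /S6 /R1; mkring.
by rewrite mulmxA mulVmx // mul1mx.
Qed.

Lemma R2_E : invmx (burau_gen 4 3) *m S6 = R2.
Proof.
have U : burau_gen 4 3 \in unitmx by apply: unit_mt; rewrite G3E det_mk; ring.
have -> : S6 = burau_gen 4 3 *m R2 by rewrite G3E /S6 /R2; mkring.
by rewrite mulmxA mulVmx // mul1mx.
Qed.

Lemma burau_K n i : burau 4 (K_word n i) =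
  Pm *m ((t ^+ (4 * n))%:M *m (invmx (burau_gen 4 i.+1) *m S6)).
Proof.
rewrite /K_word burau_cat P_E burau_cat Delta_E burau_cat Q_E; congr (_ *m (_ *m (_ *m _))).
by rewrite /burau /= /burau_letter /= mulmx1.
Qed.

Definition Dp (A B C : {poly int}) n : {poly int} :=
  1 + A * 'X^(4 * n) + B * 'X^(8 * n) + C * 'X^(12 * n).

Lemma tofracDp A B C n : Defs.tofrac (Dp A B C n) =
  1 + Defs.tofrac A * t ^+ (4 * n) + Defs.tofrac B * (t ^+ (4 * n)) ^+ 2
  + Defs.tofrac C * (t ^+ (4 * n)) ^+ 3.
Proof.
rewrite /Dp /Defs.tofrac !rmorphD !rmorphM !rmorphXn rmorph1 -!exprM.
by rewrite (mulnC (4 * n) 2) (mulnC (4 * n) 3) !mulnA.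
Qed.

Definition A1 : {poly int} := 'X^3 - 'X^4 + 'X^6.
Definition B1 : {poly int} := 'X^9 - 'X^11 + 'X^12.
Definition A2 : {poly int} := 'X^3 - 'X^4 + 'X^6 - 'X^7 + 'X^8.
Definition B2 : {poly int} := 'X^7 - 'X^8 + 'X^9 - 'X^11 + 'X^12.
Definition C0 : {poly int} := 'X^15.
Definition E0 : {poly int} := 1 - 'X + 'X^3 - 'X^4 + 'X^6 - 'X^8 + 'X^9 - 'X^11 + 'X^12.

Ltac tofr := rewrite /Defs.tofrac ?(rmorphD, rmorphN, rmorphB, rmorphXn, rmorphM, rmorph1); by [].
Lemma tA1 : Defs.tofrac A1 = t^+3 - t^+4 + t^+6. Proof. rewrite /A1; tofr. Qed.
Lemma tB1 : Defs.tofrac B1 = t^+9 - t^+11 + t^+12. Proof. rewrite /B1; tofr. Qed.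
Lemma tA2 : Defs.tofrac A2 = t^+3 - t^+4 + t^+6 - t^+7 + t^+8. Proof. rewrite /A2; tofr. Qed.
Lemma tB2 : Defs.tofrac B2 = t^+7 - t^+8 + t^+9 - t^+11 + t^+12. Proof. rewrite /B2; tofr. Qed.
Lemma tC0 : Defs.tofrac C0 = t^+15. Proof. rewrite /C0; tofr. Qed.

Lemma det1 n : \det (1%:M - burau 4 (K_word n 1)) = Defs.tofrac (Dp A1 B1 C0 n).
Proof.
rewrite burau_K R1_E tofracDp tA1 tB1 tC0.
set x := t ^+ (4 * n).
rewrite /Pm /R1 !scalar_mk !mk_mul mk_sub det_mk.
ring.
Qed.

Lemma det2 n : \det (1%:M - burau 4 (K_word n 2)) = Defs.tofrac (Dp A2 B2 C0 n).
Proof.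
rewrite burau_K R2_E tofracDp tA2 tB2 tC0.
set x := t ^+ (4 * n).
rewrite /Pm /R2 !scalar_mk !mk_mul mk_sub det_mk.
ring.
Qed.

Definition Phi : {poly int} := 1 + 'X + 'X^2 + 'X^3.
Definition Gs m : {poly int} := \sum_(k < m) 'X^(4 * k).

Lemma Gs_eq m : Gs m * ('X^4 - 1) = 'X^(4 * m) - 1.
Proof.
elim: m => [|m IH]; first by rewrite /Gs big_ord0 mul0r muln0 expr0 subrr.
rewrite /Gs big_ord_recr /= -/(Gs m) mulrDl IH mulnS exprD. ring.
Qed.

Definition pp (E A B C : {poly int}) n : {poly int} :=
  E + ('X - 1) * (A * Gs n + B * Gs (2 * n) + C * Gs (3 * n)).

Lemma pp_eq E A B C n : E * Phi = 1 + A + B + C -> pp E A B C n * Phi = Dp A B C n.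
Proof.
move=> hE.
have -> : pp E A B C n * Phi = E * Phi + A * (Gs n * ('X^4 - 1))
   + B * (Gs (2*n) * ('X^4-1)) + C * (Gs (3*n) * ('X^4-1)) by rewrite /pp /Phi; ring.
rewrite !Gs_eq hE /Dp.
have -> : (4 * (2 * n) = 8 * n)%N by lia.
have -> : (4 * (3 * n) = 12 * n)%N by lia.
ring.
Qed.

Lemma S_step (p : {poly int}) s :
  \sum_(j < s.+4.+1) p`_j = \sum_(j < s.+1) p`_j + (p * Phi)`_(s.+4).
Proof.
rewrite /Phi !mulrDr mulr1 !coefD coefMX !coefMXn /=.
rewrite !big_ord_recr /= !subSS !subn0.
ring.
Qed.

Lemma sg_facts p A B C n : (1 <= n)%N -> p * Phi = Dp A B C n ->
  A`_0 = 0 -> A`_4 = -1 -> B`_0 = 0 ->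
  p`_0 = 1 /\ in_formal_semigroup p 4 /\ \sum_(j < (4 * n + 4).+1) p`_j = 0.
Proof.
move=> hn hp A0 A4 B0.
have Dc : forall j, (p * Phi)`_j = (j == 0%N)%:R + (if (j < 4*n)%N then 0 else A`_(j - 4*n))
   + (if (j < 8*n)%N then 0 else B`_(j-8*n)) + (if (j < 12*n)%N then 0 else C`_(j-12*n)).
  by move=> j; rewrite hp /Dp !coefD coef1 !coefMXn.
have p0 : p`_0 = 1.
  have := Dc 0%N; rewrite {1}/Phi !mulrDr mulr1 !coefD coefMX !coefMXn /=.
  have h4 : (0 < 4 * n)%N by lia.
  have h8 : (0 < 8 * n)%N by lia.
  have h12 : (0 < 12 * n)%N by lia.
  rewrite h4 h8 h12 !addr0 => ->; by [].
have Hk : forall k, (k <= n)%N -> \sum_(j < (4*k).+1) p`_j = 1.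
  elim=> [|k IH] hk; first by rewrite muln0 big_ord_recr big_ord0 /= add0r.
  have -> : (4 * k.+1 = (4*k).+4)%N by lia.
  rewrite S_step IH; last by lia.
  rewrite Dc /=.
  have h8 : ((4*k).+4 < 8 * n)%N by lia.
  have h12 : ((4*k).+4 < 12 * n)%N by lia.
  rewrite h8 h12.
  case: ltnP => h; first by ring.
  have -> : ((4*k).+4 - 4*n = 0)%N by lia.
  rewrite A0; ring.
split => //; split.
  by have := Hk 1%N; rewrite muln1; apply.
have -> : (4 * n + 4 = (4*n).+4)%N by lia.
rewrite S_step Hk // Dc /=.
have h12 : ((4*n).+4 < 12 * n)%N by lia.
have h4 : ((4*n).+4 < 4 * n)%N = false by lia.
have -> : ((4*n).+4 - 4 * n = 4)%N by lia.
rewrite h12 h4 A4.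
case: ltnP => h; first by ring.
have -> : ((4*n).+4 - 8*n = 0)%N by lia.
rewrite B0; ring.
Qed.

Lemma coef0_neq0 (q : {poly int}) : q`_0 != 0 -> Defs.tofrac q != 0.
Proof.
move=> h; rewrite /Defs.tofrac tofrac_eq0; apply: contra h => /eqP ->.
by rewrite coef0.
Qed.

Lemma hu_l : 1 - t != 0.
Proof.
  have -> : 1 - t = Defs.tofrac (1 - 'X) by tofr.
  by apply: coef0_neq0; rewrite coefB coef1 coefX.
Qed.
Lemma PhiE : Defs.tofrac Phi = 1 + t + t^+2 + t^+3.
Proof. rewrite /Phi; tofr. Qed.
Lemma hP_l : 1 + t + t^+2 + t^+3 != 0.
Proof. rewrite -PhiE. by apply: coef0_neq0; rewrite /Phi !coefD coef1 coefX !coefXn. Qed.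

Lemma DE p D : p * Phi = D -> Defs.tofrac D = Defs.tofrac p * (1 + t + t^+2 + t^+3).
Proof. move=> h. rewrite -h -PhiE /Defs.tofrac. rewrite rmorphM. by []. Qed.
Lemma alex_eq p D : p * Phi = D ->
  Defs.tofrac p = (-1) ^+ false * tvar ^ (0:int) * ((1 - tvar) / (1 - tvar ^+ 4)) *
    Defs.tofrac D.
Proof.
move=> h. rewrite (DE h).
rewrite expr0 expr0z !mul1r.
have -> : 1 - t ^+ 4 = (1 - t) * (1 + t + t^+2 + t^+3) by ring.
rewrite invfM !mulrA mulfV ?hu_l // mul1r mulrAC mulVf ?hP_l // mul1r. reflexivity.
Qed.

Lemma mainL n i (hn : (1 <= n)%N) A B C : E0 * Phi = 1 + A + B + C ->
    \det (1%:M - burau 4 (K_word n i)) = Defs.tofrac (Dp A B C n) ->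
    A`_0 = 0 -> A`_4 = -1 -> B`_0 = 0 ->
  exists p : {poly int},
    is_normalized_alexander 4 (K_word n i) p /\
    in_formal_semigroup p 4 /\
    ~ in_formal_semigroup p (4 * n + 4) /\
    ~ (forall a b : nat, in_formal_semigroup p a -> in_formal_semigroup p b ->
         in_formal_semigroup p (a + b)).
Proof.
  move=> hE hdet A0 A4 B0.
  have hp := pp_eq n hE.
  have [p0 [S4 Sbad]] := sg_facts hn hp A0 A4 B0.
  have Sn : ~ in_formal_semigroup (pp E0 A B C n) (4 * n + 4).
    rewrite /in_formal_semigroup Sbad. by [].
  exists (pp E0 A B C n); split.
    split; first exact: p0.
    exists false, 0; rewrite hdet. exact: alex_eq hp.
  split; first exact: S4.
  split; first exact: Sn.
  move=> H; apply: Sn.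
  have K : forall k, in_formal_semigroup (pp E0 A B C n) (4 * k.+1).
    elim=> [|k IH]; first by rewrite muln1.
    rewrite mulnS. apply: H. exact: S4. exact: IH.
  have := K n. rewrite mulnS addnC. exact.
Qed.

Lemma e1 : E0 * Phi = 1 + A1 + B1 + C0. Proof. rewrite /E0 /A1 /B1 /C0 /Phi. ring. Qed.
Lemma e2 : E0 * Phi = 1 + A2 + B2 + C0. Proof. rewrite /E0 /A2 /B2 /C0 /Phi. ring. Qed.
Lemma cA1_0 : A1`_0 = 0. Proof. by rewrite /A1 !coefD !coefN !coefXn. Qed.
Lemma cA1_4 : A1`_4 = -1. Proof. by rewrite /A1 !coefD !coefN !coefXn. Qed.
Lemma cB1_0 : B1`_0 = 0. Proof. by rewrite /B1 !coefD !coefN !coefXn. Qed.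
Lemma cA2_0 : A2`_0 = 0. Proof. by rewrite /A2 !coefD !coefN !coefXn. Qed.
Lemma cA2_4 : A2`_4 = -1. Proof. by rewrite /A2 !coefD !coefN !coefXn. Qed.
Lemma cB2_0 : B2`_0 = 0. Proof. by rewrite /B2 !coefD !coefN !coefXn. Qed.

Theorem corollary3p5 (n i : nat) (hn : (1 <= n)%N) (hi : (i == 1)%N || (i == 2)%N) :
  exists p : {poly int},
    is_normalized_alexander 4 (K_word n i) p /\
    in_formal_semigroup p 4 /\
    ~ in_formal_semigroup p (4 * n + 4) /\
    ~ (forall a b : nat, in_formal_semigroup p a -> in_formal_semigroup p b ->
         in_formal_semigroup p (a + b)).
Proof.
case/orP: hi => /eqP ->.
- exact: (mainL hn e1 (det1 n) cA1_0 cA1_4 cB1_0).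
- exact: (mainL hn e2 (det2 n) cA2_0 cA2_4 cB2_0).
Qed.
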